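(* In the setting of the context, Axiom (P3) holds for $\{d_a\mid a\in C\}$ with any $\theta\ge4\delta$: for any $b,c\in C$ the set $\{a\in C\setminus\{b,c\}: d_a(b,c)>\theta\}$ is finite.
   Context: $X$ is a $\delta$-hyperbolic geodesic metric space ($\delta>0$, every geodesic triangle $\delta$-thin). $G$ acts on $X$ by isometries and $\mathcal{C}=(C,\{G_c\})$ is a $\rho$-separated fairly rotating family with $\rho\ge20\delta$ (i.e. $C\subseteq X$ is $G$-invariant, $G_c$ fixes $c$, $G_{gc}=gG_cg^{-1}$, distinct points of $C$ are at distance $\ge\rho$, and for $c\in C$, $g\in G_c\setminus\{1\}$, $x\in C\setminus\{c\}$ some geodesic from $x$ to $gx$ meets the closed $1$-ball about $c$). Fix $2+2\delta\le R\le\frac\rho2-3\delta$; $B_r(p)$ denotes the open ball. For $p\in C$, $S_p=\{x:d(x,p)=R\}$ with metric $d_{S_p}(x,y)=$ infimum of lengths of paths from $x$ to $y$ in $X\setminus B_R(p)$ (possibly $\infty$). For $x\in C\setminus\{p\}$, $\pi_p(x)\subseteq S_p$ is the set of points where geodesics $[p,x]$ meet $S_p$, and $d_p(x,y)=\operatorname{diam}_{S_p}(\pi_p(x)\cup\pi_p(y))$. *)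

(* Defs.v *)
From Stdlib Require Import Reals List.
From Coquelicot Require Import Coquelicot.
Open Scope R_scope.

Section Defs.
Variable X : Type.
Variable d : X -> X -> R.

Definition is_metric : Prop :=
  (forall x y, 0 <= d x y) /\
  (forall x y, d x y = 0 <-> x = y) /\
  (forall x y, d x y = d y x) /\
  (forall x y z, d x z <= d x y + d y z).

Definition geodesic (gam : R -> X) (x y : X) : Prop :=
  gam 0 = x /\ gam (d x y) = y /\
  (forall s t, 0 <= s <= d x y -> 0 <= t <= d x y ->
     d (gam s) (gam t) = Rabs (s - t)).

Definition on_geod (gam : R -> X) (x y : X) (u : X) : Prop :=
  exists t, 0 <= t <= d x y /\ gam t = u.

Definition geodesic_space : Prop :=
  forall x y, exists gam, geodesic gam x y.

Definition thin_triangles (delta : R) : Prop :=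
  forall (x y z : X) (g1 g2 g3 : R -> X),
    geodesic g1 x y -> geodesic g2 y z -> geodesic g3 z x ->
    (forall u, on_geod g1 x y u -> exists w,
        (on_geod g2 y z w \/ on_geod g3 z x w) /\ d u w <= delta) /\
    (forall u, on_geod g2 y z u -> exists w,
        (on_geod g3 z x w \/ on_geod g1 x y w) /\ d u w <= delta) /\
    (forall u, on_geod g3 z x u -> exists w,
        (on_geod g1 x y w \/ on_geod g2 y z w) /\ d u w <= delta).

Definition path_cont (gam : R -> X) : Prop :=
  forall t, 0 <= t <= 1 -> forall eps, 0 < eps -> exists eta, 0 < eta /\
    forall s, 0 <= s <= 1 -> Rabs (s - t) < eta -> d (gam s) (gam t) < eps.

Fixpoint poly_sum (gam : R -> X) (t0 : R) (ts : list R) : R :=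
  match ts with
  | nil => 0
  | t1 :: ts' => d (gam t0) (gam t1) + poly_sum gam t1 ts'
  end.

Fixpoint sorted_le (t0 : R) (ts : list R) : Prop :=
  match ts with
  | nil => True
  | t1 :: ts' => t0 <= t1 /\ sorted_le t1 ts'
  end.

(* partitions 0 = t_0 <= t_1 <= ... <= t_n = 1, given as the tail t_1..t_n *)
Definition partition01 (ts : list R) : Prop :=
  sorted_le 0 ts /\ last ts 0 = 1.

Definition path_length (gam : R -> X) : Rbar :=
  Rbar_lub (fun l => exists ts, partition01 ts /\ l = Finite (poly_sum gam 0 ts)).

Definition in_open_ball (p : X) (r : R) (x : X) : Prop := d x p < r.

Definition in_sphere (p : X) (r : R) (x : X) : Prop := d x p = r.

(* d_{S_p}(x,y): infimum of lengths of paths from x to y in X \ B_r(p)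
   (= +oo when there is no such path). *)
Definition dS (p : X) (r : R) (x y : X) : Rbar :=
  Rbar_glb (fun l => exists gam, path_cont gam /\ gam 0 = x /\ gam 1 = y /\
     (forall t, 0 <= t <= 1 -> ~ in_open_ball p r (gam t)) /\
     l = path_length gam).

Definition in_proj (p : X) (r : R) (x : X) (u : X) : Prop :=
  exists gam, geodesic gam p x /\ on_geod gam p x u /\ in_sphere p r u.

Definition diamS (p : X) (r : R) (A : X -> Prop) : Rbar :=
  Rbar_lub (fun l => exists u v, A u /\ A v /\ l = dS p r u v).

Definition dproj (p : X) (r : R) (x y : X) : Rbar :=
  diamS p r (fun u => in_proj p r x u \/ in_proj p r y u).

Variable G : Type.
Variable mul : G -> G -> G.
Variable inv : G -> G.
Variable one : G.
Variable act : G -> X -> X.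

Definition is_group : Prop :=
  (forall a b c, mul (mul a b) c = mul a (mul b c)) /\
  (forall a, mul one a = a) /\ (forall a, mul a one = a) /\
  (forall a, mul (inv a) a = one) /\ (forall a, mul a (inv a) = one).

Definition isometric_action : Prop :=
  (forall x, act one x = x) /\
  (forall g h x, act (mul g h) x = act g (act h x)) /\
  (forall g x y, d (act g x) (act g y) = d x y).

Definition is_subgroup (H : G -> Prop) : Prop :=
  H one /\ (forall a b, H a -> H b -> H (mul a b)) /\ (forall a, H a -> H (inv a)).

Definition fairly_rotating_family (C : X -> Prop) (Gs : X -> G -> Prop) (rho : R) : Prop :=
  (forall g c, C c -> C (act g c)) /\
  (forall c, C c -> is_subgroup (Gs c)) /\
  (forall c g, C c -> Gs c g -> act g c = c) /\
  (forall c g h, C c ->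
     (Gs (act g c) h <-> exists k, Gs c k /\ h = mul (mul g k) (inv g))) /\
  (forall c c', C c -> C c' -> c <> c' -> rho <= d c c') /\
  (forall c g x, C c -> Gs c g -> g <> one -> C x -> x <> c ->
     exists gam, geodesic gam x (act g x) /\
       exists u, on_geod gam x (act g x) u /\ d u c <= 1).

End Defs.

Definition finite_set {T : Type} (P : T -> Prop) : Prop :=
  exists l : list T, forall a, P a -> In a l.

(* Main.v *)
Require Import Defs.
From Stdlib Require Import Reals List Lra Classical.
From Coquelicot Require Import Coquelicot.
Open Scope R_scope.

Ltac rabs := unfold Rabs in *; repeat match goal with
  | |- context [Rcase_abs ?x] => destruct (Rcase_abs x)
  | H : context [Rcase_abs ?x] |- _ => destruct (Rcase_abs x) end; lra.

Lemma lub_le (E : Rbar -> Prop) (b : Rbar) :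
  (forall x, E x -> Rbar_le x b) -> Rbar_le (Rbar_lub E) b.
Proof.
  intros H. unfold Rbar_lub. apply (proj2 (proj2_sig (Rbar_ex_lub E))). exact H.
Qed.

Lemma glb_le (E : Rbar -> Prop) (x : Rbar) : E x -> Rbar_le (Rbar_glb E) x.
Proof.
  intros H. unfold Rbar_glb. apply (proj1 (proj2_sig (Rbar_ex_glb E))). exact H.
Qed.

Definition Lip1 {X} (d : X -> X -> R) (f : R -> X) (T : R) : Prop :=
  forall s t, 0 <= s <= T -> 0 <= t <= T -> d (f s) (f t) <= Rabs (s - t).

Definition concat {X} (f g : R -> X) (a : R) : R -> X :=
  fun t => if Rle_dec t a then f t else g (t - a).

Lemma concat_left {X} (f g : R -> X) a t : t <= a -> concat f g a t = f t.
Proof. intros H. unfold concat. destruct (Rle_dec t a); [reflexivity|lra]. Qed.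

Lemma concat_right {X} (f g : R -> X) a t : f a = g 0 -> a <= t -> concat f g a t = g (t - a).
Proof.
  intros E H. unfold concat. destruct (Rle_dec t a); [|reflexivity].
  assert (t = a) by lra. subst. rewrite Rminus_diag. exact E.
Qed.

Lemma concat_all {X} (P : X -> Prop) (f g : R -> X) a b :
  (forall t, 0 <= t <= a -> P (f t)) -> (forall t, 0 <= t <= b -> P (g t)) ->
  forall t, 0 <= t <= a + b -> P (concat f g a t).
Proof.
  intros Hf Hg t Ht. unfold concat. destruct (Rle_dec t a).
  - apply Hf; lra.
  - apply Hg; lra.
Qed.

Lemma concat_Lip {X} (d : X -> X -> R) (f g : R -> X) a b :
  is_metric X d -> 0 <= a -> 0 <= b -> Lip1 d f a -> Lip1 d g b -> f a = g 0 ->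
  Lip1 d (concat f g a) (a + b).
Proof.
  intros [Hpos [Hzero [Hsym Htri]]] Ha Hb Hf Hg E s t Hs Ht. unfold concat.
  destruct (Rle_dec s a); destruct (Rle_dec t a).
  - apply Hf; lra.
  - pose proof (Htri (f s) (f a) (g (t - a))).
    pose proof (Hf s a ltac:(lra) ltac:(lra)).
    rewrite E in *. pose proof (Hg 0 (t - a) ltac:(lra) ltac:(lra)). rabs.
  - pose proof (Htri (g (s - a)) (f a) (f t)).
    pose proof (Hf a t ltac:(lra) ltac:(lra)).
    rewrite E in *. pose proof (Hg (s - a) 0 ltac:(lra) ltac:(lra)). rabs.
  - pose proof (Hg (s - a) (t - a) ltac:(lra) ltac:(lra)).
    replace (s - a - (t - a)) with (s - t) in * by ring. exact H.
Qed.

Lemma last_indep (l : list R) x d1 d2 : last (x :: l) d1 = last (x :: l) d2.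
Proof.
  revert x. induction l as [|y l IH]; intros x; [reflexivity|].
  change (last (y :: l) d1 = last (y :: l) d2). apply IH.
Qed.

Lemma last_cons (t0 t1 : R) ts : last (t1 :: ts) t0 = last ts t1.
Proof.
  destruct ts as [|x ts]; [reflexivity|].
  change (last (x :: ts) t0 = last (x :: ts) t1). apply last_indep.
Qed.

Lemma sorted_last t0 ts : sorted_le t0 ts -> t0 <= last ts t0.
Proof.
  revert t0. induction ts as [|t1 ts IH]; intros t0 H; [simpl; lra|].
  destruct H as [H1 H2]. rewrite last_cons. specialize (IH t1 H2). lra.
Qed.

Lemma poly_bound {X} (d : X -> X -> R) (gam : R -> X) (T : R) :
  0 <= T -> (forall s t, 0 <= s <= 1 -> 0 <= t <= 1 -> d (gam s) (gam t) <= T * Rabs (s - t)) ->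
  forall ts t0, 0 <= t0 -> sorted_le t0 ts -> last ts t0 <= 1 ->
  poly_sum X d gam t0 ts <= T * (last ts t0 - t0).
Proof.
  intros HT HL ts. induction ts as [|t1 ts IH]; intros t0 H0 Hs Hl.
  - simpl. lra.
  - destruct Hs as [H1 H2]. rewrite last_cons in Hl.
    pose proof (sorted_last t1 ts H2).
    specialize (IH t1 ltac:(lra) H2 Hl).
    rewrite last_cons. simpl poly_sum.
    pose proof (HL t0 t1 ltac:(lra) ltac:(lra)).
    rewrite Rabs_minus_sym, Rabs_pos_eq in H3 by lra. nra.
Qed.

Lemma path_ok {X} (d : X -> X -> R) (a : X) (Rr T : R) (p : R -> X) :
  is_metric X d -> 0 <= T -> Lip1 d p T ->
  (forall tau, 0 <= tau <= T -> Rr <= d (p tau) a) ->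
  Rbar_le (dS X d a Rr (p 0) (p T)) (Finite T).
Proof.
  intros Hm HT HL Hout.
  set (gam := fun t => p (T * t)).
  assert (HLg : forall s t, 0 <= s <= 1 -> 0 <= t <= 1 -> d (gam s) (gam t) <= T * Rabs (s - t)).
  { intros s t Hs Ht. unfold gam.
    assert (E : Rabs (T * s - T * t) = T * Rabs (s - t)).
    { replace (T * s - T * t) with (T * (s - t)) by ring. rewrite Rabs_mult, (Rabs_pos_eq T HT). ring. }
    rewrite <- E. apply HL; nra. }
  apply Rbar_le_trans with (path_length X d gam).
  - apply glb_le. exists gam. split; [|split; [|split; [|split]]].
    + intros t Ht eps Heps. exists (eps / (T + 1)). split.
      * apply Rdiv_lt_0_compat; lra.
      * intros s Hs Hst. pose proof (HLg s t Hs Ht).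
        assert (T * Rabs (s - t) <= T * (eps / (T + 1))) by (apply Rmult_le_compat_l; lra).
        assert (T * (eps / (T + 1)) < eps).
        { unfold Rdiv. rewrite <- Rmult_assoc.
          apply Rmult_lt_reg_r with (T + 1); [lra|].
          rewrite Rmult_assoc, Rinv_l by lra. nra. }
        lra.
    + unfold gam. rewrite Rmult_0_r. reflexivity.
    + unfold gam. rewrite Rmult_1_r. reflexivity.
    + intros t Ht. unfold in_open_ball, gam. specialize (Hout (T * t) ltac:(nra)). lra.
    + reflexivity.
  - apply lub_le. intros x [ts [[Hs Hl] ->]]. simpl.
    pose proof (poly_bound d gam T HT HLg ts 0 ltac:(lra) Hs ltac:(lra)). rewrite Hl in H. lra.
Qed.

Lemma geod_d0 {X} (d : X -> X -> R) g x y t :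
  is_metric X d -> geodesic X d g x y -> 0 <= t <= d x y -> d x (g t) = t /\ d (g t) x = t.
Proof.
  intros [Hpos [Hzero [Hsym Htri]]] [H0 [H1 H2]] Ht.
  assert (E : d (g 0) (g t) = t).
  { rewrite H2 by (pose proof (Hpos x y); lra). rabs. }
  rewrite H0 in E. split; [exact E|]. rewrite Hsym. exact E.
Qed.

Lemma geod_rev {X} (d : X -> X -> R) g x y :
  is_metric X d -> geodesic X d g x y -> geodesic X d (fun t => g (d x y - t)) y x.
Proof.
  intros [Hpos [Hzero [Hsym Htri]]] [H0 [H1 H2]].
  split; [|split].
  - rewrite Rminus_0_r. exact H1.
  - rewrite (Hsym y x), Rminus_diag. exact H0.
  - intros s t Hs Ht. rewrite (Hsym y x) in Hs, Ht. rewrite H2 by lra. rabs.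
Qed.

Lemma geod_const {X} (d : X -> X -> R) x :
  is_metric X d -> geodesic X d (fun _ => x) x x.
Proof.
  intros [Hpos [Hzero [Hsym Htri]]]. assert (E : d x x = 0) by (apply Hzero; reflexivity).
  split; [reflexivity|split; [reflexivity|]].
  intros s t Hs Ht. rewrite E in *. rabs.
Qed.

Lemma key {X} (d : X -> X -> R) (delta : R) :
  is_metric X d -> geodesic_space X d -> thin_triangles X d delta -> 0 < delta ->
  forall a Rr y1 y2 g12 u v,
  geodesic X d g12 y1 y2 ->
  (forall t, 0 <= t <= d y1 y2 -> Rr + 2 * delta < d (g12 t) a) ->
  Rr + delta <= d a y1 ->
  in_proj X d a Rr y1 u -> in_proj X d a Rr y2 v ->
  Rbar_le (dS X d a Rr u v) (Finite (4 * delta)).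
Proof.
  intros Hm Hgs Hthin Hd a Rr y1 y2 g12 u v H12 Hfar Hy1
    [g1 [Hg1 [[t1 [Ht1 Hu]] Hs1]]] [g2 [Hg2 [[t2 [Ht2 Hv]] Hs2]]].
  pose proof Hm as [Hpos [Hzero [Hsym Htri]]].
  unfold in_sphere in Hs1, Hs2.
  assert (t1 = Rr) by (subst u; rewrite <- Hs1; symmetry; apply (geod_d0 d g1 a y1 t1 Hm Hg1 Ht1)).
  assert (t2 = Rr) by (subst v; rewrite <- Hs2; symmetry; apply (geod_d0 d g2 a y2 t2 Hm Hg2 Ht2)).
  subst t1 t2.
  set (x := g1 (Rr + delta)).
  assert (Hxa : d x a = Rr + delta /\ d a x = Rr + delta)
    by (destruct (geod_d0 d g1 a y1 (Rr + delta) Hm Hg1 ltac:(lra)); split; assumption).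
  pose proof (geod_rev d g2 a y2 Hm Hg2) as Hg3.
  destruct (Hthin a y1 y2 g1 g12 _ Hg1 H12 Hg3) as [Hth _].
  destruct (Hth x) as [w [Hw Hxw]].
  { exists (Rr + delta). split; [lra|reflexivity]. }
  destruct Hw as [[t [Ht Hw]]|[t [Ht Hw]]].
  - exfalso. specialize (Hfar t Ht). rewrite Hw in Hfar.
    pose proof (Htri w x a). rewrite (Hsym w x) in H. lra.
  - rewrite (Hsym y2 a) in Ht.
    set (s := d a y2 - t) in Hw.
    assert (Hwa : d w a = s /\ d a w = s).
    { rewrite <- Hw. destruct (geod_d0 d g2 a y2 s Hm Hg2 ltac:(unfold s; lra)). split; assumption. }
    assert (Hs_hi : s <= Rr + 2 * delta) by (pose proof (Htri a x w); lra).
    assert (Hs_lo : Rr <= s) by (pose proof (Htri x w a); lra).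
    destruct (Hgs x w) as [gxw Hgxw].
    set (e := d x w).
    assert (He : 0 <= e) by apply Hpos.
    set (P1 := fun tau => g1 (Rr + tau)).
    set (P3 := fun tau => g2 (s - tau)).
    set (p := concat (concat P1 gxw delta) P3 (delta + e)).
    assert (J1 : P1 delta = gxw 0) by (unfold P1; destruct Hgxw as [E _]; rewrite E; reflexivity).
    assert (J2 : concat P1 gxw delta (delta + e) = P3 0).
    { rewrite concat_right by (assumption || lra).
      unfold P3. rewrite Rminus_0_r. replace (delta + e - delta) with e by ring.
      destruct Hgxw as [_ [E _]]. unfold e. rewrite E. symmetry; exact Hw. }
    assert (L1 : Lip1 d P1 delta).
    { intros s1 s2 Hs1' Hs2'. unfold P1. destruct Hg1 as [_ [_ G]].
      rewrite G by lra. replace (Rr + s1 - (Rr + s2)) with (s1 - s2) by ring. lra. }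
    assert (L2 : Lip1 d gxw e).
    { intros s1 s2 Hs1' Hs2'. destruct Hgxw as [_ [_ G]]. rewrite G by (unfold e in *; lra). lra. }
    assert (L3 : Lip1 d P3 (s - Rr)).
    { intros s1 s2 Hs1' Hs2'. unfold P3. destruct Hg2 as [_ [_ G]].
      rewrite G by (unfold s in *; lra). replace (s - s1 - (s - s2)) with (s2 - s1) by ring.
      rewrite Rabs_minus_sym. lra. }
    assert (Lp : Lip1 d p (delta + e + (s - Rr))).
    { apply concat_Lip; try assumption; try lra. apply concat_Lip; assumption || lra. }
    assert (Out : forall tau, 0 <= tau <= delta + e + (s - Rr) -> Rr <= d (p tau) a).
    { apply (concat_all (fun z => Rr <= d z a) _ P3 (delta + e) (s - Rr)).
      - apply (concat_all (fun z => Rr <= d z a) P1 gxw delta e).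
        + intros tau Htau. unfold P1.
          destruct (geod_d0 d g1 a y1 (Rr + tau) Hm Hg1 ltac:(lra)). lra.
        + intros tau Htau.
          destruct (geod_d0 d gxw x w tau Hm Hgxw ltac:(unfold e in Htau; lra)).
          pose proof (Htri x (gxw tau) a). unfold e in *. lra.
      - intros tau Htau. unfold P3.
        destruct (geod_d0 d g2 a y2 (s - tau) Hm Hg2 ltac:(unfold s in *; lra)). lra. }
    pose proof (path_ok d a Rr (delta + e + (s - Rr)) p Hm ltac:(lra) Lp Out) as HP.
    assert (Ep0 : p 0 = u).
    { unfold p. rewrite concat_left by lra. rewrite concat_left by lra. unfold P1.
      rewrite Rplus_0_r. exact Hu. }
    assert (EpT : p (delta + e + (s - Rr)) = v).
    { unfold p. rewrite concat_right by (assumption || lra). unfold P3.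
      replace (s - (delta + e + (s - Rr) - (delta + e))) with Rr by ring. exact Hv. }
    rewrite Ep0, EpT in HP. apply Rbar_le_trans with (1 := HP). simpl. unfold e. lra.
Qed.

Lemma far_dproj {X} (d : X -> X -> R) (delta : R) :
  is_metric X d -> geodesic_space X d -> thin_triangles X d delta -> 0 < delta ->
  forall a Rr b c gbc, geodesic X d gbc b c ->
  (forall t, 0 <= t <= d b c -> Rr + 2 * delta < d (gbc t) a) ->
  Rr + 2 * delta < d a b -> Rr + 2 * delta < d a c ->
  Rbar_le (dproj X d a Rr b c) (Finite (4 * delta)).
Proof.
  intros Hm Hgs Hthin Hd a Rr b c gbc Hbc Hfar Hb Hc.
  pose proof Hm as [Hpos [Hzero [Hsym Htri]]].
  unfold dproj, diamS. apply lub_le. intros l [u [v [Hu [Hv ->]]]].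
  destruct Hu as [Hu|Hu]; destruct Hv as [Hv|Hv].
  - apply (key d delta Hm Hgs Hthin Hd a Rr b b (fun _ => b) u v (geod_const d b Hm));
      try assumption; try lra.
    intros t _. rewrite Hsym. exact Hb.
  - apply (key d delta Hm Hgs Hthin Hd a Rr b c gbc u v Hbc); try assumption; lra.
  - apply (key d delta Hm Hgs Hthin Hd a Rr c b _ u v (geod_rev d gbc b c Hm Hbc));
      try assumption; try lra.
    intros t Ht. rewrite (Hsym c b) in Ht. apply Hfar. lra.
  - apply (key d delta Hm Hgs Hthin Hd a Rr c c (fun _ => c) u v (geod_const d c Hm));
      try assumption; try lra.
    intros t _. rewrite Hsym. exact Hc.
Qed.

Lemma at_most_one_finite {T} (P : T -> Prop) :
  (forall a a', P a -> P a' -> a = a') -> finite_set P.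
Proof.
  intros H. destruct (classic (exists a, P a)) as [[a0 H0]|Hn].
  - exists (a0 :: nil). intros a Ha. left. apply H; assumption.
  - exists nil. intros a Ha. exfalso. apply Hn. exists a. exact Ha.
Qed.

Lemma finite_union {T} (P P1 P2 : T -> Prop) :
  finite_set P1 -> finite_set P2 -> (forall a, P a -> P1 a \/ P2 a) -> finite_set P.
Proof.
  intros [l1 H1] [l2 H2] H. exists (l1 ++ l2). intros a Ha. apply in_or_app.
  destruct (H a Ha); [left; apply H1 | right; apply H2]; assumption.
Qed.

Lemma finite_slab {T} (P : T -> Prop) (Q : T -> R -> Prop) (D e : R) :
  0 < e -> (forall a, P a -> exists t, 0 <= t <= D /\ Q a t) ->
  (forall a a' t t', P a -> P a' -> 0 <= t <= D -> 0 <= t' <= D -> Q a t -> Q a' t' ->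
     Rabs (t - t') <= e -> a = a') ->
  finite_set P.
Proof.
  intros He Hex Huniq.
  assert (Hn : forall n, finite_set (fun a => P a /\ exists t, 0 <= t <= D /\ t <= INR n * e /\ Q a t)).
  { induction n as [|n IH].
    - apply at_most_one_finite. intros a a' [Pa [t [Ht [Ht0 Qt]]]] [Pa' [t' [Ht' [Ht0' Qt']]]].
      simpl in Ht0, Ht0'. apply (Huniq a a' t t'); try assumption. rabs.
    - apply (finite_union _ _
        (fun a => P a /\ exists t, 0 <= t <= D /\ INR n * e < t <= INR (S n) * e /\ Q a t) IH).
      + apply at_most_one_finite. intros a a' [Pa [t [Ht [Ht0 Qt]]]] [Pa' [t' [Ht' [Ht0' Qt']]]].
        rewrite S_INR in Ht0, Ht0'. apply (Huniq a a' t t'); try assumption. rabs.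
      + intros a [Pa [t [Ht [Htn Qt]]]]. destruct (Rle_dec t (INR n * e)).
        * left. split; [assumption|]. exists t. auto.
        * right. split; [assumption|]. exists t. split; [assumption|]. split; [|assumption]. lra. }
  destruct (INR_unbounded (D / e)) as [n Hnn].
  destruct (Hn n) as [l Hl]. exists l. intros a Pa. apply Hl. split; [assumption|].
  destruct (Hex a Pa) as [t [Ht Qt]]. exists t. split; [assumption|]. split; [|assumption].
  assert (D <= INR n * e).
  { apply Rlt_le. apply (Rmult_lt_reg_r (/ e)). apply Rinv_0_lt_compat; lra.
    rewrite Rmult_assoc, Rinv_r by lra. rewrite Rmult_1_r. unfold Rdiv in Hnn. lra. }
  lra.
Qed.

Theorem lemma3p6
  (X : Type) (d : X -> X -> R) (delta : R)
  (G : Type) (mul : G -> G -> G) (inv : G -> G) (one : G) (act : G -> X -> X)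
  (C : X -> Prop) (Gs : X -> G -> Prop) (rho Rr theta : R)
  (Hmet : is_metric X d)
  (Hgeod : geodesic_space X d)
  (Hdelta : 0 < delta)
  (Hhyp : thin_triangles X d delta)
  (Hgrp : is_group G mul inv one)
  (Hact : isometric_action X d G mul one act)
  (Hrot : fairly_rotating_family X d G mul inv one act C Gs rho)
  (Hrho : 20 * delta <= rho)
  (HR1 : 2 + 2 * delta <= Rr)
  (HR2 : Rr <= rho / 2 - 3 * delta)
  (Htheta : 4 * delta <= theta) :
  forall b c, C b -> C c ->
    finite_set (fun a => C a /\ a <> b /\ a <> c /\
                         Rbar_lt (Finite theta) (dproj X d a Rr b c)).
Proof.
  intros b c Cb Cc.
  destruct Hrot as [_ [_ [_ [_ [Hsep _]]]]].
  pose proof Hmet as [Hpos [Hzero [Hsym Htri]]].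
  destruct (Hgeod b c) as [gbc Hbc].
  apply (finite_slab _ (fun a t => d (gbc t) a <= Rr + 2 * delta) (d b c) delta Hdelta).
  - intros a [Ca [Hab [Hac Hlt]]]. apply NNPP. intro Hn.
    assert (Hfar : forall t, 0 <= t <= d b c -> Rr + 2 * delta < d (gbc t) a).
    { intros t Ht. apply Rnot_le_lt. intro Hle. apply Hn. exists t. auto. }
    pose proof (Hsep a b Ca Cb Hab). pose proof (Hsep a c Ca Cc Hac).
    pose proof (far_dproj d delta Hmet Hgeod Hhyp Hdelta a Rr b c gbc Hbc Hfar
                  ltac:(lra) ltac:(lra)) as Hle.
    destruct (dproj X d a Rr b c); simpl in *; lra.
  - intros a a' t t' [Ca _] [Ca' _] Ht Ht' Q Q' Habs.
    destruct (classic (a = a')) as [E|Ne]; [exact E|exfalso].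
    pose proof (Hsep a a' Ca Ca' Ne).
    destruct Hbc as [_ [_ G1]]. pose proof (G1 t t' Ht Ht').
    pose proof (Htri a (gbc t) a'). pose proof (Htri (gbc t) (gbc t') a').
    rewrite (Hsym a (gbc t)) in *. lra.
Qed.
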